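(* For $\kappa>0$ set $r_0(\kappa)=\sqrt{\kappa+1}-\sqrt{\kappa}$, $$\mu_0(\kappa)=\frac{1+\sqrt{\kappa}-\sqrt{1+\kappa}}{1-\sqrt{\kappa}+\sqrt{1+\kappa}},\qquad t_\kappa(r)=\int_{r_0(\kappa)}^{r}\frac{2\,du}{\sqrt{4\kappa u^2-(1-u^2)^2}}\ \ (r_0(\kappa)\le r<1),$$ and for $z=x+{\rm i}y$ with $x\in\mathbb{R}$, $0<y<1$, set $t_\kappa(x,y)=t_\kappa\big(|g^{-1}(\mu_0(\kappa)z)|\big)$, where $g^{-1}(w)=\frac{{\rm i}-w}{{\rm i}+w}$ (this is defined for all sufficiently small $\kappa$, depending on $(x,y)$). Then for each fixed $(x,y)$, as $\kappa\to0^+$, $$t_\kappa(x,y)=\arccos y+\frac{\kappa}{4}\Big(\frac{x^2y}{\sqrt{1-y^2}}-\arccos y\Big)+o(\kappa).$$ Consequently the graphs $\Phi_\kappa(x,y)=(x,y,t_\kappa(x,y))$ converge to $\Phi_0(x,y)=(x,y,\arccos y)$, which parametrizes half of a parabolic catenoid in $\mathfrak{H}\times\mathbb{R}$, and the normal component of $\frac{d\Phi_\kappa}{d\kappa}\big|_{\kappa=0}$ with respect to the unit normal $\nu=(0,-y^2,-\sqrt{1-y^2})$ is $$w(x,y)=\tfrac14\big(\sqrt{1-y^2}\,\arccos y-x^2y\big).$$ In the parametrization $\widehat F(x,t)=(x,\cos t,t)$, $(x,t)\in\mathbb{R}\times(-\pi/2,\pi/2)$, of the full parabolic catenoid, this Jacobi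 field is $w(x,t)=\frac14(t\sin t-x^2\cos t)$, and it satisfies the Jacobi equation $(\partial_x^2+\partial_t^2+1)w=0$; equivalently, on the parametrization $(x,t)\mapsto(x,\sin t,t)$, $t\in(0,\pi)$, the corresponding Jacobi field is $\frac18\big((\pi-2t)\cos t-2x^2\sin t\big)$.
   Context: $\mathfrak{H}=\{x+{\rm i}y:y>0\}$ with metric $\frac{dx^2+dy^2}{y^2}$ and $\mathbb{D}=\{|z|<1\}$ with metric $\frac{4|dz|^2}{(1-|z|^2)^2}$ are models of $\mathbb{H}^2$, related by the isometry $g(z)={\rm i}\frac{1-z}{1+z}$; $\mathfrak{H}\times\mathbb{R}$ has the product metric with $dt^2$. For each $\kappa>0$, $r\mapsto t_\kappa(r)$, $r\in[r_0(\kappa),1)$, describes (as $t=\pm t_\kappa(|z|)$ over the annulus $r_0\le|z|<1$ in $\mathbb{D}$) the minimal catenoid of revolution in $\mathbb{H}^2\times\mathbb{R}$ with neck radius (Euclidean, in $\mathbb{D}$) $r_0(\kappa)$, and $(x,y)\mapsto(x,y,t_\kappa(x,y))$ is the upper half of the image of this catenoid under $g$ followed by the hyperbolic dilation $z\mapsto z/\mu_0(\kappa)$ of $\mathfrak{H}$. *)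

(* Defs.v *)
From Stdlib Require Import Reals Lra ClassicalEpsilon.
Open Scope R_scope.

Definition r0 (k : R) : R := sqrt (k + 1) - sqrt k.

Definition mu0 (k : R) : R :=
  (1 + sqrt k - sqrt (1 + k)) / (1 - sqrt k + sqrt (1 + k)).

Definition integrand (k : R) (u : R) : R :=
  2 / sqrt (4 * k * u ^ 2 - (1 - u ^ 2) ^ 2).

Definition improper_int_left (f : R -> R) (a b I : R) : Prop :=
  a < b /\
  forall eps, 0 < eps -> exists delta, 0 < delta /\
    forall a', a < a' < a + delta -> a' < b ->
      exists pr : Riemann_integrable f a' b, Rabs (RiemannInt pr - I) < eps.

(* t_kappa(r) = int_{r0(kappa)}^r 2 du / sqrt(4 kappa u^2 - (1-u^2)^2);
   equals 0 for r <= r0(kappa) (the integral over a degenerate interval),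
   and otherwise is the (unique, when it exists) improper integral. *)
Definition t_kappa (k r : R) : R :=
  match Rlt_dec (r0 k) r with
  | left _ => epsilon (inhabits 0) (fun I => improper_int_left (integrand k) (r0 k) r I)
  | right _ => 0
  end.

(* |g^{-1}(w)| for w = a + i b, where g^{-1}(w) = (i - w)/(i + w):
   |i - w|^2 = a^2 + (1-b)^2, |i + w|^2 = a^2 + (1+b)^2. *)
Definition ginv_abs (a b : R) : R :=
  sqrt ((a ^ 2 + (1 - b) ^ 2) / (a ^ 2 + (1 + b) ^ 2)).

Definition t_kappa_xy (k x y : R) : R :=
  t_kappa k (ginv_abs (mu0 k * x) (mu0 k * y)).

Definition coeff1 (x y : R) : R :=
  / 4 * (x ^ 2 * y / sqrt (1 - y ^ 2) - acos y).

(* product metric of H x R at a point with height y: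
   ((a1 b1 + a2 b2)/y^2) + a3 b3 *)
Definition hmetric (y : R) (a b : R * R * R) : R :=
  let '(a1, a2, a3) := a in let '(b1, b2, b3) := b in
  (a1 * b1 + a2 * b2) / y ^ 2 + a3 * b3.

Definition nu (y : R) : R * R * R := (0, - y ^ 2, - sqrt (1 - y ^ 2)).

Definition w_xy (x y : R) : R := / 4 * (sqrt (1 - y ^ 2) * acos y - x ^ 2 * y).

(* Jacobi field in the parametrization F(x,t) = (x, cos t, t) *)
Definition w_xt (x t : R) : R := / 4 * (t * sin t - x ^ 2 * cos t).

(* Jacobi field in the parametrization (x, sin t, t), t in (0, pi) *)
Definition w_sin (x t : R) : R := / 8 * ((PI - 2 * t) * cos t - 2 * x ^ 2 * sin t).

(* Main.v *)
Require Import Defs.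
From Stdlib Require Import Reals.
From Stdlib Require Import Lra Psatz ClassicalEpsilon.
From Coquelicot Require Import Coquelicot.
Open Scope R_scope.


Definition hp k (p : R) := / sqrt (1 + k * cos p ^ 2).
Definition E k p := RInt (hp k) 0 p.
Definition pp k p := p - k / 4 * (p + sin p * cos p).
Definition pp' k p := 1 - k / 2 * cos p ^ 2.

Lemma hp_cont k p : 0 <= k -> continuous (hp k) p.
Proof. intros Hk. apply (@ex_derive_continuous R_AbsRing R_NormedModule). unfold hp.
  auto_derive. assert (0 <= cos p * cos p) by nra.
  split; [nra|]. split; [|easy]. apply Rgt_not_eq, sqrt_lt_R0; nra. Qed.

Lemma E_deriv k p : 0 <= k -> is_derive (E k) p (hp k p).
Proof. intros Hk. apply is_derive_RInt with (a := 0).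
  - apply filter_forall. intros b. apply (@RInt_correct R_CompleteNormedModule), ex_RInt_continuous.
    intros; apply hp_cont; auto.
  - apply hp_cont; auto. Qed.

Lemma hp_bound k p : 0 <= k -> 0 <= hp k p <= 1.
Proof. intros Hk. unfold hp. assert (0 <= cos p ^ 2) by nra.
  assert (1 <= sqrt (1 + k * cos p ^ 2)).
  { rewrite <- sqrt_1 at 1. apply sqrt_le_1_alt. nra. }
  split. left; apply Rinv_0_lt_compat; lra.
  apply Rle_trans with (/1); [apply Rinv_le_contravar; lra | rewrite Rinv_1; lra]. Qed.

Lemma E_abs k p : 0 <= k -> 0 <= p -> Rabs (E k p) <= p.
Proof. intros Hk Hp. unfold E.
  replace p with ((p - 0) * 1) at 2 by ring.
  apply abs_RInt_le_const; auto.
  - apply (@ex_RInt_continuous R_CompleteNormedModule); intros; apply hp_cont; auto.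
  - intros t _. pose proof (hp_bound k t Hk). rewrite Rabs_pos_eq; lra. Qed.

Lemma pp_deriv k p : is_derive (pp k) p (pp' k p).
Proof. unfold pp, pp'. auto_derive; auto. assert (H : sin p * sin p = 1 - cos p * cos p) by (pose proof (sin2_cos2 p) as H0; unfold Rsqr in H0; lra).
  replace (sin p * (1 * - sin p)) with (-(sin p * sin p)) by ring. rewrite H. change (AbsRing.sort R_AbsRing) with R in p. field. Qed.

Lemma hp_approx k p : 0 <= k <= 1 -> Rabs (hp k p - pp' k p) <= k ^ 2.
Proof. intros Hk. unfold hp, pp'. set (c := cos p ^ 2).
  assert (Hc : 0 <= c <= 1). { unfold c. pose proof (COS_bound p). nra. }
  set (w := sqrt (1 + k * c)).
  assert (Hw2 : w * w = 1 + k * c) by (apply sqrt_sqrt; nra).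
  assert (Hw1 : 1 <= w). { unfold w. rewrite <- sqrt_1 at 1. apply sqrt_le_1_alt. nra. }
  assert (E1 : / w - (1 - k / 2 * c) = (w-1)^2*(w+2)/(2*w)).
  { replace (k / 2 * c) with ((w*w-1)/2) by (rewrite Hw2; field). field. lra. }
  rewrite E1. rewrite Rabs_pos_eq.
  2:{ apply Rmult_le_pos. apply Rmult_le_pos; [apply pow2_ge_0|lra]. left; apply Rinv_0_lt_compat; lra. }
  assert (Hwm : (w - 1) * 2 <= k) by nra.
  apply Rmult_le_reg_r with (2*w); [lra|].
  unfold Rdiv. rewrite Rmult_assoc, Rinv_l, Rmult_1_r by lra.
  assert (A1 : (w-1)^2*4 <= k^2) by nra.
  assert (A2 : 0 <= (w-1)^2) by apply pow2_ge_0.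
  nra. Qed.

Lemma E_approx k p : 0 <= k <= 1 -> 0 <= p -> Rabs (E k p - pp k p) <= k ^ 2 * p.
Proof. intros Hk Hp.
  assert (H1 : is_RInt (pp' k) 0 p (minus (pp k p) (pp k 0))).
  { apply (@is_RInt_derive R_CompleteNormedModule). intros; apply pp_deriv.
    intros; apply (@ex_derive_continuous R_AbsRing R_NormedModule). unfold pp'. auto_derive; auto. }
  assert (H2 : is_RInt (hp k) 0 p (E k p)).
  { apply (@RInt_correct R_CompleteNormedModule), ex_RInt_continuous; intros; apply hp_cont; lra. }
  pose proof (is_RInt_minus _ _ _ _ _ _ H2 H1) as H3.
  assert (Hpp0 : pp k 0 = 0). { unfold pp. rewrite sin_0, cos_0. ring. }
  rewrite Hpp0 in H3.
  replace (E k p - pp k p) with (RInt (fun y => minus (hp k y) (pp' k y)) 0 p).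
  2:{ apply is_RInt_unique. replace (E k p - pp k p) with (minus (E k p) (minus (pp k p) 0)). exact H3. unfold minus, plus, opp; simpl; ring. }
  replace (k ^ 2 * p) with ((p - 0) * k ^ 2) by ring.
  apply abs_RInt_le_const; auto.
  - eexists; eauto.
  - intros t _. apply hp_approx; auto. Qed.

Definition qf k u := (/ u - u) / (2 * sqrt k).

Lemma basic k : 0 < k -> sqrt k * sqrt k = k /\ sqrt (k+1) * sqrt (k+1) = k + 1 /\
  0 < sqrt k /\ sqrt k < sqrt (k+1) /\ 0 < r0 k /\ r0 k * (sqrt (k+1) + sqrt k) = 1.
Proof. intros Hk. assert (H1 : sqrt k * sqrt k = k) by (apply sqrt_sqrt; lra).
  assert (H2 : sqrt (k+1) * sqrt (k+1) = k+1) by (apply sqrt_sqrt; lra).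
  assert (H3 : 0 < sqrt k) by (apply sqrt_lt_R0; lra).
  assert (H4 : sqrt k < sqrt (k+1)) by (apply sqrt_lt_1_alt; lra).
  unfold r0. repeat split; try lra. Qed.

Lemma key_ineqs k u : 0 < k -> r0 k < u < 1 ->
  0 < 4*k*u^2 - (1-u^2)^2 /\ 0 < qf k u < 1.
Proof. intros Hk Hu. destruct (basic k Hk) as (H1 & H2 & H3 & H4 & H5 & H6).
  unfold r0 in *. set (s := sqrt k) in *. set (A := sqrt (k+1)) in *.
  assert (F1 : 0 < u*u + 2*s*u - 1) by nra.
  assert (F2 : 0 < 1 + 2*s*u - u*u) by nra.
  split. { replace (4*k*u^2 - (1-u^2)^2) with ((u*u + 2*s*u - 1)*(1 + 2*s*u - u*u)) by (rewrite <- H1; ring). nra. }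
  unfold qf. fold s. replace (/u - u) with ((1 - u*u)/u) by (field; lra).
  split.
  - apply Rmult_lt_0_compat. apply Rmult_lt_0_compat. nra. apply Rinv_0_lt_compat; lra. apply Rinv_0_lt_compat; lra.
  - apply Rmult_lt_reg_r with (2*s*u). nra. unfold Rdiv. field_simplify. all: nra. Qed.

Lemma acos_deriv q : -1 < q < 1 -> is_derive acos q (-1 / sqrt (1 - q^2)).
Proof. intros Hq. apply is_derive_Reals.
  apply derive_pt_eq_1 with (derivable_pt_acos q Hq).
  rewrite derive_pt_acos. unfold Rsqr. f_equal. f_equal. ring. Qed.

Definition G k u := E k (acos (qf k u)).

Lemma integrand_cont k u : 0 < k -> r0 k < u < 1 -> continuous (integrand k) u.
Proof. intros Hk Hu. destruct (key_ineqs k u Hk Hu) as [HP _].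
  apply (@ex_derive_continuous R_AbsRing R_NormedModule). unfold integrand.
  auto_derive. split. nra. split; [|easy]. apply Rgt_not_eq, sqrt_lt_R0; nra. Qed.

Lemma G_deriv k u : 0 < k -> r0 k < u < 1 -> is_derive (G k) u (integrand k u).
Proof. intros Hk Hu. destruct (key_ineqs k u Hk Hu) as [HP Hq].
  destruct (basic k Hk) as (H1 & H2 & H3 & H4 & H5 & H6).
  assert (Hu0 : 0 < u) by lra.
  assert (Dq : is_derive (qf k) u ((- / u ^ 2 - 1) / (2 * sqrt k))).
  { unfold qf. auto_derive. lra. field. split; lra. }
  assert (Da : is_derive acos (qf k u) (-1 / sqrt (1 - qf k u ^ 2))) by (apply acos_deriv; lra).
  assert (DE : is_derive (E k) (acos (qf k u)) (hp k (acos (qf k u)))) by (apply E_deriv; lra).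
  pose proof (@is_derive_comp R_AbsRing R_NormedModule _ _ _ _ _ Da Dq) as D1.
  pose proof (@is_derive_comp R_AbsRing R_NormedModule (E k) (fun x => acos (qf k x)) u _ _ DE D1) as D2.
  unfold G. replace (integrand k u) with (scal (scal ((- / u ^ 2 - 1) / (2 * sqrt k)) (-1 / sqrt (1 - qf k u ^ 2))) (hp k (acos (qf k u)))). exact D2.
  unfold scal; simpl; unfold mult; simpl.
  unfold hp. rewrite cos_acos by lra. set (q := qf k u) in *. set (s := sqrt k) in *.
  assert (Eq : q = (1 - u*u)/(2*s*u)) by (unfold q, qf; fold s; field; lra).
  assert (S1 : sqrt (1 + k * q ^ 2) = (1+u^2)/(2*u)).
  { replace (1 + k * q ^ 2) with (((1+u^2)/(2*u))^2). apply sqrt_pow2.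
    apply Rmult_le_pos. nra. left; apply Rinv_0_lt_compat; lra.
    rewrite Eq, <- H1. field. lra. }
  assert (S2 : sqrt (1 - q * (q * 1)) = sqrt (4*k*u^2 - (1-u^2)^2) / (2*s*u)).
  { replace (1 - q * (q * 1)) with ((4*k*u^2 - (1-u^2)^2) / ((2*s*u)^2)).
    rewrite sqrt_div_alt, sqrt_pow2. reflexivity. nra. nra.
    rewrite Eq, <- H1. field. lra. }
  assert (SP : 0 < sqrt (4*k*u^2 - (1-u^2)^2)) by (apply sqrt_lt_R0; lra).
  unfold integrand. rewrite S1, S2. field. repeat split; try lra. nra.
Qed.

Lemma G_diff k a b : 0 < k -> r0 k < a -> a < b -> b < 1 ->
  exists pr : Riemann_integrable (integrand k) a b, RiemannInt pr = G k b - G k a.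
Proof. intros Hk Ha Hab Hb.
  assert (H : is_RInt (integrand k) a b (minus (G k b) (G k a))).
  { apply (@is_RInt_derive R_CompleteNormedModule).
    - intros x Hx. rewrite Rmin_left, Rmax_right in Hx by lra. apply G_deriv; lra.
    - intros x Hx. rewrite Rmin_left, Rmax_right in Hx by lra. apply integrand_cont; lra. }
  exists (ex_RInt_Reals_0 _ _ _ (ex_intro _ _ H)).
  rewrite <- RInt_Reals. apply is_RInt_unique. exact H. Qed.

Lemma G_small k a : 0 < k -> Rabs (G k a) <= acos (qf k a).
Proof. intros Hk. unfold G. apply E_abs. lra. apply acos_bound. Qed.

Lemma improper k r : 0 < k -> r0 k < r < 1 ->
  improper_int_left (integrand k) (r0 k) r (G k r).
Proof. intros Hk Hr. split; [lra|]. intros eps Heps.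
  destruct (basic k Hk) as (H1 & H2 & H3 & H4 & H5 & H6).
  set (e := Rmin eps 1).
  assert (He : 0 < e <= 1) by (unfold e; split; [apply Rmin_case; lra | apply Rmin_r]).
  assert (He2 : e <= eps) by (unfold e; apply Rmin_l).
  pose proof PI2_1 as Hpi.
  set (c := cos e).
  assert (Hc0 : 0 < c) by (unfold c; apply cos_gt_0; lra).
  assert (Hc1 : c < 1) by (unfold c; rewrite <- cos_0; apply cos_decreasing_1; lra).
  set (i := / r0 k).
  assert (Hi : r0 k * i = 1) by (unfold i; field; lra).
  assert (Hi2 : i - r0 k = 2 * sqrt k).
  { assert (i = sqrt (k+1) + sqrt k) by (apply Rmult_eq_reg_l with (r0 k); lra).
    assert (Hr0 : r0 k = sqrt (k+1) - sqrt k) by reflexivity. lra. }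
  assert (Hipos : 0 < i) by (unfold i; apply Rinv_0_lt_compat; lra).
  exists (sqrt k * (1 - c) / (i * i + 1)). split.
  { apply Rdiv_lt_0_compat; nra. }
  intros a' Ha' Har.
  set (ia := / a').
  assert (Hia : a' * ia = 1) by (unfold ia; field; lra).
  assert (Hiapos : 0 < ia) by (unfold ia; apply Rinv_0_lt_compat; lra).
  assert (Hiai : ia <= i) by (unfold ia, i; apply Rinv_le_contravar; lra).
  assert (Hid : ia = i - (a' - r0 k) * i * ia) by nra.
  assert (Hdelta : (a' - r0 k) * (i * i + 1) < sqrt k * (1 - c)).
  { destruct Ha' as [_ Ha']. apply Rmult_lt_reg_r with (/ (i*i+1)).
    apply Rinv_0_lt_compat; nra.
    replace ((a' - r0 k) * (i * i + 1) * / (i * i + 1)) with (a' - r0 k) by (field; nra).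
    unfold Rdiv in Ha'. lra. }
  assert (Hq : c < qf k a').
  { unfold qf. fold ia. apply Rmult_lt_reg_r with (2 * sqrt k). lra.
    unfold Rdiv. rewrite Rmult_assoc, Rinv_l, Rmult_1_r by lra.
    assert ((a' - r0 k) * i * ia <= (a' - r0 k) * i * i).
    { apply Rmult_le_compat_l; [|lra]. apply Rmult_le_pos; lra. }
    nra. }
  destruct (key_ineqs k a' Hk ltac:(lra)) as [_ Hq2].
  assert (Hac : acos (qf k a') < e).
  { destruct (Rlt_or_le (acos (qf k a')) e) as [Hl|Hl]; [exact Hl|].
    exfalso. pose proof (acos_bound (qf k a')) as Hb.
    assert (H : cos (acos (qf k a')) <= cos e).
    { destruct Hl as [Hl|Hl]. left; apply cos_decreasing_1; lra. rewrite Hl; lra. }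
    rewrite cos_acos in H by lra. fold c in H. lra. }
  destruct (G_diff k a' r Hk ltac:(lra) Har ltac:(lra)) as [pr Hpr].
  exists pr. rewrite Hpr. replace (G k r - G k a' - G k r) with (- G k a') by ring.
  rewrite Rabs_Ropp. pose proof (G_small k a' Hk). lra. Qed.

Lemma improper_unique f a b I J : improper_int_left f a b I -> improper_int_left f a b J -> I = J.
Proof. intros [Hab HI] [_ HJ].
  destruct (Req_dec I J) as [|Hne]; [auto|exfalso].
  set (eps := Rabs (I - J) / 2).
  assert (Heps : 0 < eps) by (unfold eps; apply Rdiv_lt_0_compat; [apply Rabs_pos_lt; lra|lra]).
  destruct (HI eps Heps) as [d1 [Hd1 P1]]. destruct (HJ eps Heps) as [d2 [Hd2 P2]].
  set (a' := a + Rmin (Rmin d1 d2) (b - a) / 2).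
  assert (Hm : 0 < Rmin (Rmin d1 d2) (b - a)) by (repeat apply Rmin_case; lra).
  assert (Hm1 : Rmin (Rmin d1 d2) (b - a) <= d1) by (eapply Rle_trans; [apply Rmin_l|apply Rmin_l]).
  assert (Hm2 : Rmin (Rmin d1 d2) (b - a) <= d2) by (eapply Rle_trans; [apply Rmin_l|apply Rmin_r]).
  assert (Hm3 : Rmin (Rmin d1 d2) (b - a) <= b - a) by apply Rmin_r.
  destruct (P1 a' ltac:(unfold a'; lra) ltac:(unfold a'; lra)) as [pr1 Q1].
  destruct (P2 a' ltac:(unfold a'; lra) ltac:(unfold a'; lra)) as [pr2 Q2].
  rewrite (RiemannInt_P5 pr1 pr2) in Q1.
  assert (Rabs (I - J) <= Rabs (RiemannInt pr2 - I) + Rabs (RiemannInt pr2 - J)).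
  { replace (I - J) with (-(RiemannInt pr2 - I) + (RiemannInt pr2 - J)) by ring.
    eapply Rle_trans. apply Rabs_triang. rewrite Rabs_Ropp. lra. }
  unfold eps in *. lra. Qed.

Lemma t_kappa_eq k r : 0 < k -> r0 k < r < 1 -> t_kappa k r = G k r.
Proof. intros Hk Hr. unfold t_kappa. destruct (Rlt_dec (r0 k) r) as [_|]; [|lra].
  pose proof (improper k r Hk Hr) as HG.
  pose proof (epsilon_spec (inhabits 0) (fun I => improper_int_left (integrand k) (r0 k) r I)
     (ex_intro _ _ HG)) as HE. simpl in HE.
  eapply improper_unique; eauto. Qed.

Definition Qf x y k := 2*y / ((1 + sqrt (1+k)) * sqrt ((1 + k / (1 + sqrt(1+k))^2 * (x^2+y^2))^2 - 4 * (k / (1 + sqrt(1+k))^2) * y^2)).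

Lemma Qf_deriv x y : is_derive (Qf x y) 0 (- y * (1 + x^2 - y^2)/4).
Proof. unfold Qf. auto_derive; rewrite ?Rplus_0_r, ?sqrt_1, ?Rmult_0_l, ?Rplus_0_r, ?Rmult_0_l, ?Rminus_0_r.
  all: replace (1 * (1 * 1) + - (4 * 0 * (y * (y * 1)))) with 1 by ring; rewrite ?sqrt_1.
  repeat split; lra. field. Qed.

Lemma Qf_0 x y : Qf x y 0 = y.
Proof. unfold Qf. rewrite Rplus_0_r, sqrt_1.
  replace ((1 + 0 / (1 + 1) ^ 2 * (x ^ 2 + y ^ 2)) ^ 2 - 4 * (0 / (1 + 1) ^ 2) * y ^ 2) with 1 by field.
  rewrite sqrt_1. field. Qed.

Lemma mu0_eq k : 0 < k -> mu0 k = sqrt k / (1 + sqrt (1 + k)).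
Proof. intros Hk. assert (H1 : sqrt k * sqrt k = k) by (apply sqrt_sqrt; lra).
  assert (H2 : sqrt (1+k) * sqrt (1+k) = 1+k) by (apply sqrt_sqrt; lra).
  assert (H3 : 0 < sqrt k) by (apply sqrt_lt_R0; lra).
  assert (H4 : sqrt k < sqrt (1+k)) by (apply sqrt_lt_1_alt; lra).
  unfold mu0. set (s := sqrt k) in *. set (A := sqrt (1+k)) in *.
  assert (E1 : (1 + s - A) * (1 + A) = s * (1 - s + A)) by nra.
  apply Rmult_eq_reg_r with ((1 - s + A) * (1 + A)); [|nra].
  field_simplify; try lra. Qed.

Lemma ginv_Q k x y : 0 < k -> 0 < y < 1 ->
  0 < ginv_abs (mu0 k * x) (mu0 k * y) < 1 /\ qf k (ginv_abs (mu0 k * x) (mu0 k * y)) = Qf x y k.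
Proof. intros Hk Hy. rewrite mu0_eq by lra.
  assert (H1 : sqrt k * sqrt k = k) by (apply sqrt_sqrt; lra).
  assert (H2 : sqrt (1+k) * sqrt (1+k) = 1+k) by (apply sqrt_sqrt; lra).
  assert (H3 : 0 < sqrt k) by (apply sqrt_lt_R0; lra).
  assert (H4 : sqrt k < sqrt (1+k)) by (apply sqrt_lt_1_alt; lra).
  unfold Qf, qf, ginv_abs. set (s := sqrt k) in *. set (A := sqrt (1+k)) in *.
  set (m := s / (1 + A)).
  assert (Hm : 0 < m < 1).
  { unfold m. split. apply Rdiv_lt_0_compat; lra.
    apply Rmult_lt_reg_r with (1+A). lra. unfold Rdiv. rewrite Rmult_assoc, Rinv_l by lra. lra. }
  set (a := m * x). set (b := m * y).
  assert (Hb : 0 < b < 1) by (unfold b; nra).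
  set (N := a ^ 2 + (1 - b) ^ 2). set (M := a ^ 2 + (1 + b) ^ 2).
  assert (HN : 0 < N) by (unfold N; nra).
  assert (HMN : M - N = 4 * b) by (unfold M, N; ring).
  assert (HM : 0 < M) by lra.
  assert (HNM : 0 < N / M < 1).
  { split. apply Rdiv_lt_0_compat; lra. apply Rmult_lt_reg_r with M; [lra|].
    unfold Rdiv. rewrite Rmult_assoc, Rinv_l by lra. lra. }
  split.
  { split. apply sqrt_lt_R0; lra. rewrite <- sqrt_1. apply sqrt_lt_1_alt; lra. }
  rewrite sqrt_div_alt by lra.
  assert (SN : sqrt N * sqrt N = N) by (apply sqrt_sqrt; lra).
  assert (SM : sqrt M * sqrt M = M) by (apply sqrt_sqrt; lra).
  assert (SN0 : 0 < sqrt N) by (apply sqrt_lt_R0; lra).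
  assert (SM0 : 0 < sqrt M) by (apply sqrt_lt_R0; lra).
  replace ((1 + k / (1 + A) ^ 2 * (x ^ 2 + y ^ 2)) ^ 2 - 4 * (k / (1 + A) ^ 2) * y ^ 2) with (N * M).
  2:{ unfold N, M, a, b, m. rewrite <- H1. clearbody M N b a m A s. field. lra. }
  rewrite sqrt_mult by lra.
  replace (/ (sqrt N / sqrt M) - sqrt N / sqrt M) with ((M - N) / (sqrt N * sqrt M)).
  2:{ rewrite <- SN, <- SM at 1. field. lra. }
  rewrite HMN. unfold b, m. field. repeat split; lra. Qed.

Lemma r_gt_r0 k r : 0 < k -> 0 < r -> qf k r < 1 -> r0 k < r.
Proof. intros Hk Hr Hq. destruct (basic k Hk) as (H1 & H2 & H3 & H4 & H5 & H6).
  destruct (Rlt_or_le (r0 k) r) as [|Hle]; [auto|exfalso].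
  assert (Hi : / r0 k = sqrt (k+1) + sqrt k) by (apply Rmult_eq_reg_l with (r0 k); [rewrite Rinv_r|]; lra).
  assert (Hr0 : r0 k = sqrt (k+1) - sqrt k) by reflexivity.
  assert (/ r0 k <= / r) by (apply Rinv_le_contravar; lra).
  unfold qf in Hq. assert (/ r - r < 2 * sqrt k).
  { apply Rmult_lt_reg_r with (/ (2 * sqrt k)). apply Rinv_0_lt_compat; lra.
    rewrite Rinv_r by lra. exact Hq. }
  lra. Qed.

Definition Phi x y k := pp k (acos (Qf x y k)).

Lemma Phi_0 x y : Phi x y 0 = acos y.
Proof. unfold Phi, pp. rewrite Qf_0. unfold Rdiv. rewrite Rmult_0_l, Rmult_0_l. ring. Qed.

Lemma Phi_deriv x y : 0 < y < 1 -> is_derive (Phi x y) 0 (coeff1 x y).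
Proof. intros Hy.
  assert (Da : is_derive acos (Qf x y 0) (-1 / sqrt (1 - (Qf x y 0)^2))) by (rewrite Qf_0; apply acos_deriv; lra).
  pose proof (@is_derive_comp R_AbsRing R_NormedModule acos (Qf x y) 0 _ _ Da (Qf_deriv x y)) as Dpsi.
  unfold Phi, pp.
  auto_derive.
  { repeat split; try (eexists; exact Da); eexists; apply Qf_deriv. }
  replace (Derive (fun x0 => Qf x y x0) 0) with (- y * (1 + x^2 - y^2)/4)
    by (symmetry; apply is_derive_unique, Qf_deriv).
  replace (Derive (fun x0 => acos x0) (Qf x y 0)) with (-1 / sqrt (1 - Qf x y 0 ^ 2))
    by (symmetry; apply is_derive_unique, Da).
  rewrite Qf_0, cos_acos, sin_acos by lra. rewrite Rsqr_pow2.
  unfold coeff1. set (t := sqrt (1 - y^2)).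
  assert (Ht : t * t = 1 - y^2) by (apply sqrt_sqrt; nra).
  assert (Ht0 : 0 < t) by (apply sqrt_lt_R0; nra).
  replace (y^2) with (1 - t*t) by lra. field. lra.
Qed.

Lemma dquot f l : is_derive f 0 l -> forall eps, 0 < eps ->
  exists d, 0 < d /\ forall h, 0 < h < d -> Rabs (f h - f 0 - l * h) <= eps * h.
Proof. intros Hd eps He. apply is_derive_Reals in Hd. destruct (Hd eps He) as [d Hd'].
  exists (pos d). split. apply cond_pos. intros h Hh.
  assert (Hh0 : h <> 0) by lra.
  assert (Hh1 : Rabs h < d) by (rewrite Rabs_pos_eq; lra).
  specialize (Hd' h Hh0 Hh1). rewrite Rplus_0_l in Hd'.
  replace (f h - f 0 - l * h) with (h * ((f h - f 0) / h - l)) by (field; lra).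
  rewrite Rabs_mult, (Rabs_pos_eq h) by lra. nra. Qed.

Lemma lt_min_l a b k : k < Rmin a b -> k < a.
Proof. intros H. eapply Rlt_le_trans; [exact H|apply Rmin_l]. Qed.
Lemma lt_min_r a b k : k < Rmin a b -> k < b.
Proof. intros H. eapply Rlt_le_trans; [exact H|apply Rmin_r]. Qed.

Lemma main1 x y : 0 < y < 1 -> forall eps, 0 < eps -> exists delta, 0 < delta /\
  forall k, 0 < k < delta -> Rabs (t_kappa_xy k x y - (acos y + k * coeff1 x y)) <= eps * k.
Proof. intros Hy eps Heps.
  destruct (dquot _ _ (Qf_deriv x y) 1 Rlt_0_1) as [d1 [Hd1 P1]].
  destruct (dquot _ _ (Phi_deriv x y Hy) (eps/2) ltac:(lra)) as [d2 [Hd2 P2]].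
  set (L := Rabs (- y * (1 + x ^ 2 - y ^ 2) / 4) + 1).
  assert (HL : 1 <= L) by (unfold L; pose proof (Rabs_pos (- y * (1 + x ^ 2 - y ^ 2) / 4)); lra).
  exists (Rmin (Rmin d1 d2) (Rmin ((1 - y) / L) (Rmin 1 (eps / 8)))). split.
  { repeat apply Rmin_glb_lt; try lra. apply Rdiv_lt_0_compat; lra. }
  intros k [Hk Hkd].
  pose proof (lt_min_l _ _ _ Hkd) as Ha. pose proof (lt_min_r _ _ _ Hkd) as Hb.
  pose proof (lt_min_l _ _ _ Ha) as Hk1. pose proof (lt_min_r _ _ _ Ha) as Hk2.
  pose proof (lt_min_l _ _ _ Hb) as Hk3. pose proof (lt_min_r _ _ _ Hb) as Hb'.
  pose proof (lt_min_l _ _ _ Hb') as Hk4. pose proof (lt_min_r _ _ _ Hb') as Hk5.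
  specialize (P1 k ltac:(lra)). specialize (P2 k ltac:(lra)).
  rewrite Qf_0 in P1. rewrite Phi_0 in P2.
  assert (HkL : k * L < 1 - y).
  { apply Rmult_lt_reg_r with (/ L). apply Rinv_0_lt_compat; lra.
    rewrite Rmult_assoc, Rinv_r, Rmult_1_r by lra. exact Hk3. }
  assert (HQ1 : Qf x y k < 1).
  { assert (HH : Qf x y k - y - - y * (1 + x ^ 2 - y ^ 2) / 4 * k <= 1 * k) by (eapply Rle_trans; [apply RRle_abs|exact P1]).
    assert (Hl : - y * (1 + x ^ 2 - y ^ 2) / 4 * k <= Rabs (- y * (1 + x ^ 2 - y ^ 2) / 4) * k).
    { apply Rmult_le_compat_r; [lra|apply RRle_abs]. }
    unfold L in HkL. lra. }
  destruct (ginv_Q k x y Hk Hy) as [Hr Hqr].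
  set (r := ginv_abs (mu0 k * x) (mu0 k * y)) in *.
  assert (Hr0 : r0 k < r) by (apply r_gt_r0; lra).
  assert (HT : t_kappa_xy k x y = E k (acos (Qf x y k))).
  { unfold t_kappa_xy. fold r. rewrite t_kappa_eq by lra. unfold G. rewrite Hqr. reflexivity. }
  rewrite HT.
  pose proof (acos_bound (Qf x y k)) as Hab. pose proof PI_4.
  pose proof (E_approx k (acos (Qf x y k)) ltac:(lra) ltac:(lra)) as HE.
  unfold Phi in P2.
  assert (Hsq : k ^ 2 * acos (Qf x y k) <= eps / 2 * k).
  { assert (k ^ 2 * acos (Qf x y k) <= k * k * 4) by (simpl; nra). nra. }
  replace (E k (acos (Qf x y k)) - (acos y + k * coeff1 x y)) with
    ((E k (acos (Qf x y k)) - pp k (acos (Qf x y k))) + (pp k (acos (Qf x y k)) - acos y - coeff1 x y * k)) by ring.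
  eapply Rle_trans. apply Rabs_triang. lra. Qed.

Lemma acos_in y : 0 < y < 1 -> 0 < acos y < PI / 2.
Proof. intros Hy. pose proof (acos_bound y) as Hb. pose proof (cos_acos y ltac:(lra)) as Hc.
  split.
  - destruct Hb as [[Hb|Hb] _]; auto. rewrite <- Hb, cos_0 in Hc. lra.
  - destruct (Rlt_or_le (acos y) (PI/2)) as [|Hl]; auto. exfalso.
    pose proof (cos_le_0 (acos y) Hl ltac:(pose proof PI_RGT_0; lra)). lra. Qed.

Theorem mainTheorem8 :
  (forall x y, 0 < y < 1 ->
     forall eps, 0 < eps -> exists delta, 0 < delta /\
       forall k, 0 < k < delta ->
         Rabs (t_kappa_xy k x y - (acos y + k * coeff1 x y)) <= eps * k) /\
  (forall x y, 0 < y < 1 ->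
     forall eps, 0 < eps -> exists delta, 0 < delta /\
       forall k, 0 < k < delta -> Rabs (t_kappa_xy k x y - acos y) < eps) /\
  (forall x y : R, 0 < y < 1 -> exists t, 0 < t < PI / 2 /\ cos t = y /\ acos y = t) /\
  (forall x y, 0 < y < 1 ->
     (forall eps, 0 < eps -> exists delta, 0 < delta /\
        forall k, 0 < k < delta ->
          Rabs ((t_kappa_xy k x y - acos y) / k - coeff1 x y) < eps) /\
     hmetric y (nu y) (nu y) = 1 /\
     hmetric y (0, 0, coeff1 x y) (nu y) = w_xy x y) /\
  (forall x t, 0 < t < PI / 2 -> w_xy x (cos t) = w_xt x t) /\
  (exists wx wxx wt wtt : R -> R -> R,
     forall x t, - (PI / 2) < t < PI / 2 ->
       derivable_pt_lim (fun s => w_xt s t) x (wx x t) /\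
       derivable_pt_lim (fun s => wx s t) x (wxx x t) /\
       derivable_pt_lim (fun s => w_xt x s) t (wt x t) /\
       derivable_pt_lim (fun s => wt x s) t (wtt x t) /\
       wxx x t + wtt x t + w_xt x t = 0) /\
  (forall x t, 0 < t < PI -> w_xt x (t - PI / 2) = w_sin x t).
Proof.
  split; [exact main1|].
  split.
  { intros x y Hy eps Heps.
    destruct (main1 x y Hy 1 Rlt_0_1) as [d [Hd P]].
    set (C := Rabs (coeff1 x y) + 1).
    assert (HC : 1 <= C) by (unfold C; pose proof (Rabs_pos (coeff1 x y)); lra).
    exists (Rmin d (eps / C)). split. apply Rmin_glb_lt; [lra|apply Rdiv_lt_0_compat; lra].
    intros k [Hk Hkd]. pose proof (lt_min_l _ _ _ Hkd). pose proof (lt_min_r _ _ _ Hkd) as H2.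
    specialize (P k ltac:(lra)).
    assert (HkC : k * C < eps).
    { apply Rmult_lt_reg_r with (/ C). apply Rinv_0_lt_compat; lra.
      rewrite Rmult_assoc, Rinv_r, Rmult_1_r by lra. exact H2. }
    assert (Rabs (k * coeff1 x y) = k * Rabs (coeff1 x y)) by (rewrite Rabs_mult, Rabs_pos_eq; lra).
    replace (t_kappa_xy k x y - acos y) with ((t_kappa_xy k x y - (acos y + k * coeff1 x y)) + k * coeff1 x y) by ring.
    eapply Rle_lt_trans. apply Rabs_triang. unfold C in HkC. lra. }
  split.
  { intros x y Hy. exists (acos y). pose proof (acos_in y Hy).
    split; [lra|]. split; [apply cos_acos; lra|reflexivity]. }
  split.
  { intros x y Hy. split; [|split].
    - intros eps Heps. destruct (main1 x y Hy (eps/2) ltac:(lra)) as [d [Hd P]].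
      exists d. split; auto. intros k Hk. specialize (P k Hk).
      replace ((t_kappa_xy k x y - acos y) / k - coeff1 x y) with
        ((t_kappa_xy k x y - (acos y + k * coeff1 x y)) / k) by (field; lra).
      unfold Rdiv. rewrite Rabs_mult, (Rabs_pos_eq (/ k)) by (left; apply Rinv_0_lt_compat; lra).
      apply Rle_lt_trans with (eps / 2 * k * / k).
      apply Rmult_le_compat_r; [left; apply Rinv_0_lt_compat; lra|exact P].
      field_simplify; lra.
    - unfold hmetric, nu. assert (H : sqrt (1 - y^2) * sqrt (1 - y^2) = 1 - y^2) by (apply sqrt_sqrt; nra).
      set (t := sqrt (1 - y ^ 2)) in *.
      replace (- t * - t) with (1 - y^2) by (rewrite <- H; ring).
      field; lra.
    - unfold hmetric, nu, w_xy, coeff1.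
      assert (H0 : 0 < sqrt (1 - y^2)) by (apply sqrt_lt_R0; nra).
      set (t := sqrt (1 - y ^ 2)) in *. field. lra. }
  split.
  { intros x t Ht. unfold w_xy, w_xt. rewrite acos_cos by (pose proof PI_RGT_0; lra).
    assert (Hs : 0 < sin t) by (apply sin_gt_0; pose proof PI_RGT_0; lra).
    replace (1 - cos t ^ 2) with (sin t ^ 2) by (pose proof (sin2_cos2 t) as H; unfold Rsqr in H; simpl; lra).
    rewrite sqrt_pow2 by lra. ring. }
  split.
  { exists (fun x t => / 4 * (- (2 * x * cos t))), (fun x t => / 4 * (- (2 * cos t))),
      (fun x t => / 4 * (sin t + t * cos t + x ^ 2 * sin t)),
      (fun x t => / 4 * (2 * cos t - t * sin t + x ^ 2 * cos t)).
    intros x t _. repeat split; try (apply is_derive_Reals; unfold w_xt; auto_derive; auto; ring).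
    unfold w_xt. ring. }
  { intros x t _. unfold w_xt, w_sin. rewrite sin_minus, cos_minus, sin_PI2, cos_PI2. field. }
Qed.
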